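(* Let $\boldsymbol{B} = [\boldsymbol{B}[1]\ \cdots\ \boldsymbol{B}[n]]$ be a block dictionary with pairwise disjoint block subspaces $\mathcal{S}_i=\operatorname{span}(\boldsymbol{B}[i])$ of dimensions $d_i$, and let $k\ge 1$. For each $i$ let $\bar{\boldsymbol{B}}[i]\in\mathbb{R}^{D\times d_i}$ be an arbitrary full column-rank submatrix of $\boldsymbol{B}[i]$, and set $\bar{\boldsymbol{B}} = [\bar{\boldsymbol{B}}[1]\ \cdots\ \bar{\boldsymbol{B}}[n]]$. Then every signal $\boldsymbol{y}\in\mathbb{R}^D$ that admits a $k$-block-sparse representation admits a unique one (i.e. the blocks $\{i_l\}$ and the vectors $\{\boldsymbol{s}_{i_l}\}$ generating a $k$-block-sparse representation are uniquely determined) if and only if $\bar{\boldsymbol{B}}\bar{\boldsymbol{c}}\neq\boldsymbol{0}$ for every nonzero $2k$-block-sparse vector $\bar{\boldsymbol{c}}$.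
   Context: $\boldsymbol{B}\in\mathbb{R}^{D\times N}$ has unit-Euclidean-norm columns and blocks $\boldsymbol{B}[i]\in\mathbb{R}^{D\times m_i}$ (possibly with linearly dependent columns); $\mathcal{S}_i$ is the column span of $\boldsymbol{B}[i]$, $d_i=\dim\mathcal{S}_i$, and $\mathcal{S}_i\cap\mathcal{S}_j=\{0\}$ for $i\ne j$. A vector $\bar{\boldsymbol{c}}=(\bar{\boldsymbol{c}}[1];\dots;\bar{\boldsymbol{c}}[n])$ with $\bar{\boldsymbol{c}}[i]\in\mathbb{R}^{d_i}$ is $2k$-block-sparse if at most $2k$ of its blocks $\bar{\boldsymbol{c}}[i]$ are nonzero. A $k$-block-sparse representation of $\boldsymbol{y}$ is an expression $\boldsymbol{y}=\sum_{i\in\Lambda}\boldsymbol{s}_i$ with $\Lambda\subseteq\{1,\dots,n\}$, $|\Lambda|\le k$, $\boldsymbol{s}_i\in\mathcal{S}_i\setminus\{0\}$; it is unique if any two such expressions have the same $\Lambda$ and the same vectors $\boldsymbol{s}_i$. *)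

(* Defs.v *)
From HB Require Import structures.
From mathcomp Require Import all_boot all_order all_algebra.
From mathcomp Require Import reals.
Set Implicit Arguments. Unset Strict Implicit. Unset Printing Implicit Defensive.
Import Order.TTheory GRing.Theory Num.Theory.
Local Open Scope ring_scope.

Definition in_colspan (R : realType) (D m : nat) (A : 'M[R]_(D, m)) (v : 'cV[R]_D) : Prop :=
  exists x : 'cV[R]_m, v = A *m x.

Definition block_rep (R : realType) (D n : nat) (m : 'I_n -> nat)
    (B : forall i : 'I_n, 'M[R]_(D, m i)) (k : nat) (y : 'cV[R]_D)
    (Lam : {set 'I_n}) (s : 'I_n -> 'cV[R]_D) : Prop :=
  (#|Lam| <= k)%N /\
  (forall i, i \in Lam -> in_colspan (B i) (s i) /\ s i != 0) /\
  y = \sum_(i in Lam) s i.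

(* Main.v *)
Require Import Defs.
From HB Require Import structures.
From mathcomp Require Import all_boot all_order all_algebra.
From mathcomp Require Import reals.
From mathcomp Require Import zify.
Import Order.TTheory GRing.Theory Num.Theory.
Local Open Scope ring_scope.
Set Implicit Arguments. Unset Strict Implicit. Unset Printing Implicit Defensive.


Lemma colspanE (R : realType) D m (A : 'M[R]_(D, m)) v :
  in_colspan A v <-> (v^T <= A^T)%MS.
Proof.
split=> [[x ->]|/submxP [x hx]].
  by rewrite trmx_mul submxMl.
by exists x^T; rewrite -[v]trmxK hx trmx_mul trmxK.
Qed.

Lemma colsub_span (R : realType) D m r (A : 'M[R]_(D, m)) (f : 'I_r -> 'I_m) :
  \rank (colsub f A) = \rank A -> ((colsub f A)^T == A^T)%MS.
Proof.
move=> hr.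
have s : ((colsub f A)^T <= A^T)%MS by rewrite trmx_mxsub rowsub_sub.
have := mxrank_leqif_eq s. rewrite !mxrank_tr hr => h.
by rewrite -(geq_leqif h).
Qed.

Lemma colsub_free (R : realType) D m (A : 'M[R]_(D, m)) (f : 'I_(\rank A) -> 'I_m) :
  \rank (colsub f A) = \rank A -> forall x : 'cV[R]_(\rank A), colsub f A *m x = 0 -> x = 0.
Proof.
move=> hr x /(congr1 trmx); rewrite trmx_mul trmx0 => /eqP.
rewrite mulmx_free_eq0; last by rewrite /row_free mxrank_tr hr.
by move/eqP/(congr1 trmx); rewrite trmxK trmx0.
Qed.

Lemma colsub_in (R : realType) D m r (A : 'M[R]_(D, m)) (f : 'I_r -> 'I_m) x :
  in_colspan A (colsub f A *m x).
Proof. apply/colspanE; rewrite trmx_mul; apply: submx_trans (submxMl _ _) _.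
by rewrite trmx_mxsub rowsub_sub. Qed.

Lemma colsub_rep (R : realType) D m r (A : 'M[R]_(D, m)) (f : 'I_r -> 'I_m) v :
  \rank (colsub f A) = \rank A -> in_colspan A v -> exists x, v = colsub f A *m x.
Proof.
move=> hr /colspanE hv.
have := colsub_span hr => /eqmxP e.
have : (v^T <= (colsub f A)^T)%MS by rewrite e.
by case/submxP=> x hx; exists x^T; rewrite -[v]trmxK hx trmx_mul trmxK.
Qed.

Definition bs_coef (R : realType) D m r (A : 'M[R]_(D, m)) (f : 'I_r -> 'I_m) (v : 'cV[R]_D) : 'cV[R]_r :=
  (v^T *m pinvmx (colsub f A)^T)^T.

Lemma bs_coefK (R : realType) D m r (A : 'M[R]_(D, m)) (f : 'I_r -> 'I_m) v :
  \rank (colsub f A) = \rank A -> in_colspan A v -> colsub f A *m bs_coef A f v = v.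
Proof.
move=> hr /(colsub_rep hr) [x hx].
have s : (v^T <= (colsub f A)^T)%MS by rewrite hx trmx_mul submxMl.
by rewrite /bs_coef -[colsub f A]trmxK -trmx_mul trmxK mulmxKpV // trmxK.
Qed.
Unset Implicit Arguments.
Theorem proposition2 (R : realType) (D n : nat) (m : 'I_n -> nat)
    (B : forall i : 'I_n, 'M[R]_(D, m i))
    (Bunit : forall (i : 'I_n) (j : 'I_(m i)), \sum_(r < D) (B i r j) ^+ 2 = 1)
    (Bdisj : forall i j : 'I_n, i != j -> forall v : 'cV[R]_D,
        in_colspan (B i) v -> in_colspan (B j) v -> v = 0)
    (k : nat) (hk : (1 <= k)%N)
    (f : forall i : 'I_n, 'I_(\rank (B i)) -> 'I_(m i))
    (finj : forall i, injective (f i))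
    (frank : forall i, \rank (colsub (f i) (B i)) = \rank (B i)) :
  (forall y : 'cV[R]_D,
     (exists Lam s, block_rep B k y Lam s) ->
     forall Lam1 s1 Lam2 s2,
       block_rep B k y Lam1 s1 -> block_rep B k y Lam2 s2 ->
       Lam1 = Lam2 /\ (forall i, i \in Lam1 -> s1 i = s2 i))
  <->
  (forall c : forall i : 'I_n, 'cV[R]_(\rank (B i)),
     (exists i, c i != 0) ->
     (#|[set i : 'I_n | c i != 0%R :> 'cV[R]_(\rank (B i))]| <= 2 * k)%N ->
     \sum_(i < n) colsub (f i) (B i) *m c i != 0).
Proof.
split.
- move=> H c [i0 hi0] hcard; apply/negP => /eqP hs.
  set S := [set i : 'I_n | c i != 0%R :> 'cV[R]_(\rank (B i))].
  set S1 := [set x in take k (enum S)].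
  set S2 := S :\: S1.
  set v := fun i => colsub (f i) (B i) *m c i.
  have S1S : S1 \subset S.
    by apply/subsetP => x; rewrite inE => /mem_take; rewrite mem_enum.
  have cS1 : #|S1| = minn k #|S|.
    rewrite cardsE; move/card_uniqP: (take_uniq k (enum_uniq (mem S))) => ->.
    by rewrite size_take -cardE /minn; case: ltnP.
  have cS2 : #|S2| = (#|S| - #|S1|)%N by rewrite cardsD (setIidPr S1S).
  have vnz : forall i, i \in S -> v i != 0.
    move=> i; rewrite inE; apply: contra => /eqP h.
    by apply/eqP; apply: colsub_free (frank i) _ h.
  have hsum : \sum_(i in S1) v i + \sum_(i in S2) v i = 0.
    rewrite -(setIidPr S1S) -big_setID /=.
    transitivity (\sum_(i < n) v i); last exact: hs.
    rewrite [RHS](bigID (fun i => i \in S)) /= [X in _ = _ + X]big1 ?addr0 //.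
    by move=> i; rewrite inE negbK => /eqP h; rewrite /v h mulmx0.
  have r1 : block_rep B k (\sum_(i in S1) v i) S1 v.
    split; first by rewrite cS1 geq_minl.
    split=> // i hi; split; first exact: colsub_in.
    by apply: vnz; apply: (subsetP S1S).
  have r2 : block_rep B k (\sum_(i in S1) v i) S2 (fun i => - v i).
    split; first by rewrite cS2 cS1; move: hcard; rewrite -/S; lia.
    split.
      move=> i; rewrite inE => /andP [_ hi]; split.
        by rewrite /v -mulmxN; apply: colsub_in.
      by rewrite oppr_eq0 vnz.
    by rewrite sumrN; apply/eqP; rewrite -addr_eq0 hsum.
  have [e _] := H _ (ex_intro _ S1 (ex_intro _ v r1)) _ _ _ _ r1 r2.
  have : (0 < #|S1|)%N.
    rewrite cS1; have : (0 < #|S|)%N by apply/card_gt0P; exists i0; rewrite inE.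
    lia.
  case/card_gt0P => x hx.
  by move: (hx); rewrite {1}e inE => /andP [/negP h _]; apply: h.
- move=> H y _ L1 s1 L2 s2 [c1 [h1 e1]] [c2 [h2 e2]].
  set a := fun i => bs_coef (B i) (f i) (s1 i).
  set b := fun i => bs_coef (B i) (f i) (s2 i).
  set c := fun i => (if i \in L1 then a i else 0) - (if i \in L2 then b i else 0).
  have hv : forall i, colsub (f i) (B i) *m c i =
      (if i \in L1 then s1 i else 0) - (if i \in L2 then s2 i else 0).
    move=> i; rewrite /c mulmxBr; congr (_ - _).
      by case: ifP => hi; [rewrite /a bs_coefK //; exact: (h1 i hi).1 | rewrite mulmx0].
    by case: ifP => hi; [rewrite /b bs_coefK //; exact: (h2 i hi).1 | rewrite mulmx0].
  have hs : \sum_(i < n) colsub (f i) (B i) *m c i = 0.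
    under eq_bigr => i _ do rewrite hv.
    by rewrite sumrB -!big_mkcond /= -e1 -e2 subrr.
  have hcard : (#|[set i : 'I_n | c i != 0%R :> 'cV[R]_(\rank (B i))]| <= 2 * k)%N.
    apply: (leq_trans (subset_leq_card (_ : _ \subset L1 :|: L2))).
      apply/subsetP => i; rewrite !inE /c; apply: contraR.
      by rewrite negb_or => /andP [/negbTE -> /negbTE ->]; rewrite subrr.
    have := leq_card_setU L1 L2; case=> hl _; lia.
  have hc : forall i, c i = 0.
    move=> i; apply/eqP/negPn/negP => hne.
    by move: (H c (ex_intro _ i hne) hcard); rewrite hs eqxx.
  have hq : forall i, (if i \in L1 then s1 i else 0) = (if i \in L2 then s2 i else 0).
    by move=> i; apply/eqP; rewrite -subr_eq0 -hv hc mulmx0.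
  split.
    apply/setP => i; move: (hq i).
    case: (boolP (i \in L1)) => i1; case: (boolP (i \in L2)) => i2 //.
      by move=> h; move: (h1 i i1).2; rewrite h eqxx.
    by move=> h; move: (h2 i i2).2; rewrite -h eqxx.
  move=> i hi; move: (hq i); rewrite hi.
  by case: (boolP (i \in L2)) => i2 // h; move: (h1 i hi).2; rewrite h eqxx.
Qed.
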